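(* Let $H$ be a real symmetric positive definite $d\times d$ matrix and $L$ a real $d\times d$ matrix with $L^TH+HL=0$. Let $s>1$ be odd and consider the $s$-stage explicit Runge–Kutta method applied to $\frac{d}{dt}u=Lu$, $u_{n+1}=G_s u_n$ with $G_s=\sum_{k=0}^s a_k(hL)^k$, $a_0=1$, where $a_k=\frac{1}{k!}$ for $k=1,\dots,s-1$ and $a_s=\frac{1}{s!}-\frac{1}{(s+1)!}$. Then the method has order $p=s-1$ and order of energy accuracy $r=s+2$.
   Context: The order $p$ of the method is the largest integer such that $a_k=1/k!$ for all $1\le k\le p$. For $0\le k\le s$, $b_k=\sum_{i=\max(0,2k-s)}^{\min(2k,s)}(-1)^{k+i}a_i a_{2k-i}$, so that the energy $\mathcal{E}=\tfrac12\langle u,Hu\rangle$ satisfies $\mathcal{E}_{n+1}=\mathcal{E}_n+\tfrac12\sum_{k=1}^s b_k h^{2k}\|L^k u_n\|_H^2$. The leading index $m$ is the smallest $k\ge1$ with $b_k\ne0$ and the order of energy accuracy is $r=2m-1$. *)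

(* Defs.v *)
From HB Require Import structures.
From mathcomp Require Import all_boot all_order all_algebra.
Set Implicit Arguments. Unset Strict Implicit. Unset Printing Implicit Defensive.
Import Order.TTheory GRing.Theory Num.Theory.
Local Open Scope ring_scope.

Definition rk_coef (R : fieldType) (s k : nat) : R :=
  if k == 0%N then 1
  else if (k < s)%N then (k`!%:R)^-1
  else if k == s then (s`!%:R)^-1 - (s.+1`!%:R)^-1
  else 0.

Definition order_cond (R : fieldType) (a : nat -> R) (p : nat) : Prop :=
  forall k : nat, (1 <= k <= p)%N -> a k = (k`!%:R)^-1.

Definition is_order (R : fieldType) (a : nat -> R) (p : nat) : Prop :=
  order_cond a p /\ forall q : nat, order_cond a q -> (q <= p)%N.

(* b_k = sum_{i = max(0,2k-s)}^{min(2k,s)} (-1)^(k+i) a_i a_{2k-i}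
   (nat subtraction 2k - s is truncated, i.e. equals max(0, 2k-s)). *)
Definition energy_coef (R : fieldType) (s : nat) (a : nat -> R) (k : nat) : R :=
  \sum_((k.*2 - s)%N <= i < (minn k.*2 s).+1)
     (-1) ^+ (k + i) * a i * a (k.*2 - i)%N.

Definition is_leading_index (R : fieldType) (s : nat) (a : nat -> R) (m : nat)
  : Prop :=
  [/\ (1 <= m <= s)%N, energy_coef s a m != 0 &
      forall k : nat, (1 <= k < m)%N -> energy_coef s a k = 0].

Definition is_energy_order (R : fieldType) (s : nat) (a : nat -> R) (r : nat)
  : Prop :=
  exists m : nat, is_leading_index s a m /\ r = (m.*2 - 1)%N.

(* Main.v *)
Require Import Defs.
From HB Require Import structures.
From mathcomp Require Import all_boot all_order all_algebra.
From mathcomp Require Import zify ring lra.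
Import Order.TTheory GRing.Theory Num.Theory.
Local Open Scope ring_scope.

Section S.
Variable R : realFieldType.
Definition cc (i : nat) : R := (i`!%:R)^-1.

Lemma fact_neq0 n : (n`!%:R : R) != 0.
Proof. by rewrite pnatr_eq0 -lt0n fact_gt0. Qed.

Lemma binsum n : (0 < n)%N ->
  \sum_(0 <= i < n.+1) (-1) ^+ i * (cc i * cc (n - i)) = 0.
Proof.
move=> n0.
have H1 : (1 - 1 : R) ^+ n = 0 by rewrite subrr expr0n; case: n n0.
rewrite exprBn in H1.
apply: (mulfI (fact_neq0 n)); rewrite big_mkord mulr_sumr mulr0 -[RHS]H1.
apply: eq_bigr => i _.
have hi : (i <= n)%N by rewrite -ltnS.
rewrite !expr1n !mulr1 -[RHS]mulr_natr mulrCA; congr (_ * _).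
rewrite -(bin_fact hi) !natrM /cc.
field; by rewrite ?fact_neq0.
Qed.

Variable s : nat.
Notation a := (rk_coef R s).

Lemma cc0 : cc 0 = 1. Proof. by rewrite /cc fact0 invr1. Qed.
Lemma cc1 : cc 1 = 1. Proof. by rewrite /cc factS fact0 invr1. Qed.

Lemma a_lt i : (i < s)%N -> a i = cc i.
Proof. by move=> hi; rewrite /rk_coef; case: eqP => [->|_]; rewrite ?cc0 ?hi. Qed.

Lemma a_s : (0 < s)%N -> a s = cc s - cc s.+1.
Proof. move=> hs; rewrite /rk_coef ltnn eqxx. case: eqP => // e; lia. Qed.

Lemma a_gt i : (s < i)%N -> a i = 0.
Proof.
move=> hi; rewrite /rk_coef.
have -> : (i == 0%N) = false by apply/negbTE; rewrite -lt0n; lia.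
have -> : (i < s)%N = false by apply/negbTE; lia.
have -> : (i == s) = false by apply/negbTE; lia.
by [].
Qed.

Lemma Efac k : energy_coef s a k = (-1) ^+ k *
  \sum_((k.*2 - s)%N <= i < (minn k.*2 s).+1) (-1) ^+ i * (a i * a (k.*2 - i)%N).
Proof.
rewrite /energy_coef big_distrr; apply: eq_bigr => i _.
by rewrite exprD /= !mulrA.
Qed.

Lemma caseA k : (0 < k)%N -> (k.*2 < s)%N -> energy_coef s a k = 0.
Proof.
move=> k0 ks; rewrite Efac.
have -> : (k.*2 - s = 0)%N by lia.
have -> : minn k.*2 s = k.*2 by lia.
rewrite (@eq_big_nat _ _ _ 0 k.*2.+1 _ (fun i => (-1) ^+ i * (cc i * cc (k.*2 - i)))).
  by rewrite binsum ?mulr0 //; lia.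
move=> i /andP[_ hi]; rewrite !a_lt //; lia.
Qed.

Lemma caseB k : odd s -> (1 < s)%N -> k.*2 = s.+1 -> energy_coef s a k = 0.
Proof.
move=> os s1 k2; rewrite Efac k2.
have -> : (s.+1 - s = 1)%N by lia.
have -> : minn s.+1 s = s by lia.
rewrite big_ltn; last by lia.
rewrite big_nat_recr /=; last by lia.
rewrite (@eq_big_nat _ _ _ 2 s _ (fun i => (-1) ^+ i * (cc i * cc (s.+1 - i)))); last first.
  move=> i /andP[h1 h2]; rewrite !a_lt //; lia.
have h := @binsum s.+1 (ltn0Sn s).
rewrite big_ltn // big_ltn // big_nat_recr /= in h; last by lia.
rewrite big_nat_recr /= in h; last by lia.
set M := \sum_(2 <= i < s) _.
have e1 : (s.+1 - 1 = s)%N by lia.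
have e2 : (s.+1 - s = 1)%N by lia.
have e3 : (s.+1 - s.+1 = 0)%N by lia.
rewrite e1 e2 a_s ?a_lt //; try lia.
rewrite !subn0 e1 e2 e3 in h.
have sgs : (-1)^+s = -1 :> R by rewrite -signr_odd os.
have sgs1 : (-1)^+s.+1 = 1 :> R by rewrite exprS sgs mulrN1 opprK.
rewrite !cc0 !cc1 sgs sgs1 expr0 expr1 in h.
rewrite !cc1 sgs expr1 /M.
apply/eqP; rewrite mulf_eq0; apply/orP; right; apply/eqP.
rewrite -[RHS]h; ring.
Qed.

Lemma ccS n : cc n.+1 = cc n / (n%:R + 1).
Proof. by rewrite /cc factS natrM -natr1 invfM mulrC. Qed.

Lemma cc_gt0 n : 0 < cc n.
Proof. by rewrite /cc invr_gt0 ltr0n fact_gt0. Qed.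

Lemma x_ge0 : 0 <= (s%:R : R).
Proof. exact: ler0n. Qed.

Lemma as_neq0 : (0 < s)%N -> cc s - cc s.+1 != 0.
Proof.
move=> s0; rewrite ccS.
have h1 : (s%:R : R) + 1 != 0 by apply: lt0r_neq0; have := x_ge0; lra.
have hx : (s%:R : R) != 0 by rewrite pnatr_eq0 -lt0n.
have -> : cc s - cc s / (s%:R + 1) = cc s * s%:R / (s%:R + 1) by field.
by rewrite !mulf_neq0 ?invr_neq0 // fact_neq0.
Qed.

Lemma caseC k : odd s -> (1 < s)%N -> k.*2 = s.+3 -> energy_coef s a k != 0.
Proof.
move=> os s1 k2; rewrite Efac k2 mulf_neq0 ?signr_eq0 //.
have -> : minn s.+3 s = s by lia.
have sgs : (-1)^+s = -1 :> R by rewrite -signr_odd os.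
have [s3|s5] := eqVneq s 3.
  have -> : (s.+3 - s = s)%N by lia.
  rewrite big_nat1 (_ : (s.+3 - s = s)%N); last by lia.
  by rewrite sgs a_s ?mulf_neq0 ?oppr_eq0 ?oner_eq0 ?as_neq0 //; lia.
have s5' : (5 <= s)%N.
  have := odd_double_half s; rewrite os /= => hs.
  move/eqP: s5 => s5; lia.
have -> : (s.+3 - s = 3)%N by lia.
rewrite big_ltn; last by lia.
rewrite big_nat_recr /=; last by lia.
rewrite (@eq_big_nat _ _ _ 4 s _ (fun i => (-1) ^+ i * (cc i * cc (s.+3 - i)))); last first.
  move=> i /andP[h1 h2]; rewrite !a_lt //; lia.
have h := @binsum s.+3 (ltn0Sn _).
rewrite big_ltn // big_ltn // big_ltn // big_ltn // in h.
rewrite big_nat_recr /= in h; last by lia.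
rewrite big_nat_recr /= in h; last by lia.
rewrite big_nat_recr /= in h; last by lia.
rewrite big_nat_recr /= in h; last by lia.
have e1 : (s.+3 - 1 = s.+2)%N by lia.
have e2 : (s.+3 - 2 = s.+1)%N by lia.
have e3 : (s.+3 - 3 = s)%N by lia.
have e4 : (s.+3 - s = 3)%N by lia.
have e5 : (s.+3 - s.+1 = 2)%N by lia.
have e6 : (s.+3 - s.+2 = 1)%N by lia.
have e7 : (s.+3 - s.+3 = 0)%N by lia.
rewrite !subn0 e1 e2 e3 e4 e5 e6 e7 in h.
rewrite e3 e4 a_s ?a_lt //; try lia.
have sgs1 : (-1)^+s.+1 = 1 :> R by rewrite exprS sgs mulrN1 opprK.
have sgs2 : (-1)^+s.+2 = -1 :> R by rewrite exprS sgs1 mulr1.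
have sgs3 : (-1)^+s.+3 = 1 :> R by rewrite exprS sgs2 mulrN1 opprK.
have cc2 : cc 2 = 2^-1 by rewrite /cc.
have cc3 : cc 3 = 6^-1 by rewrite /cc.
rewrite !cc0 !cc1 cc2 cc3 sgs sgs1 sgs2 sgs3 !expr0 !expr1 in h.
have m2 : (-1)^+2 = 1 :> R by rewrite -signr_odd.
have m3 : (-1)^+3 = -1 :> R by rewrite -signr_odd.
rewrite m2 m3 in h; rewrite m3 sgs cc3.
set M := \sum_(4 <= i < s) _ in h *.
have hM : M = - (2 * cc s.+3 - 2 * cc s.+2 + cc s.+1 - cc s / 3).
  apply/eqP; rewrite -subr_eq0; by apply/eqP; rewrite -[RHS]h; field.
rewrite hM (ccS s.+2) (ccS s.+1) (ccS s).
have n1 : (s.+1%:R : R) = s%:R + 1 by rewrite -natr1.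
have n2 : (s.+2%:R : R) = s%:R + 2 by rewrite -!natr1; ring.
rewrite n1 n2.
have hx : (s%:R : R) != 0 by rewrite pnatr_eq0; lia.
have h1 : (s%:R : R) + 1 != 0 by apply: lt0r_neq0; have := x_ge0; lra.
have h2 : (s%:R : R) + 1 + 1 != 0 by apply: lt0r_neq0; have := x_ge0; lra.
have h3 : (s%:R : R) + 2 + 1 != 0 by apply: lt0r_neq0; have := x_ge0; lra.
have h3' : (s%:R : R) + 3 != 0 by apply: lt0r_neq0; have := x_ge0; lra.
match goal with |- is_true (negb (?E == 0)) =>
  have -> : E = - (2 * s%:R * cc s / (3 * (s%:R + 1) * (s%:R + 3))) end.
  by field; rewrite h3' h1 h2.
rewrite oppr_eq0 !mulf_neq0 ?invr_neq0 ?fact_neq0 // ?pnatr_eq0 // !mulf_neq0 // pnatr_eq0 //.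
Qed.
End S.

Theorem proposition3 (R : realFieldType) (d s : nat) (H L : 'M[R]_d) :
  (1 < s)%N -> odd s ->
  H^T = H ->
  (forall v : 'cV[R]_d, v != 0 -> 0 < (v^T *m H *m v) 0 0) ->
  L^T *m H + H *m L = 0 ->
  is_order (rk_coef R s) (s - 1) /\ is_energy_order s (rk_coef R s) (s + 2).
Proof.
move=> s1 os _ _ _.
have hs := odd_double_half s; rewrite os /= in hs.
split.
  split.
    move=> k /andP[k1 ks]; rewrite a_lt //; lia.
  move=> q hq; rewrite leqNgt; apply/negP => hlt.
  have := hq s; rewrite a_s; last by lia.
  move=> e; have {e} : cc R s.+1 = 0.
    have := e ltac:(lia); rewrite /cc => e'; lra.
  by have := cc_gt0 R s.+1; lra.
exists (s./2).+2; split; last by lia.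
split.
- lia.
- apply: caseC => //; lia.
- move=> k /andP[k1 kt].
  have [ks|ks] := ltnP k.*2 s.
    by apply: caseA.
  apply: caseB => //; lia.
Qed.
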